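(* For every $k\in\mathbb{N}$ and every $\epsilon\ge 0$, $$\Pr\{\chi^2_k\ge k(1+\epsilon)\}\ \ge\ \frac{1}{3\sqrt{k}\,\epsilon+6}\exp\left(-\frac{k\epsilon}{2}\right),$$ where $\chi^2_k$ denotes a chi-square random variable with $k$ degrees of freedom. *)

(* Defs.v *)
From Stdlib Require Import Reals Lra ClassicalEpsilon.
Open Scope R_scope.

(* This handles both an integrable singularity at a
   (needed for the Gamma function / chi-square density with k = 1) and an
   ordinary left endpoint (where the limit u -> a+ is just int_a^v). *)
Definition improper_integral (f : R -> R) (a l : R) : Prop :=
  (forall u v, a < u -> u <= v -> inhabited (Riemann_integrable f u v)) /\
  (forall eps, 0 < eps ->
     exists delta, 0 < delta /\ exists M,
       forall u v (pr : Riemann_integrable f u v),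
         a < u -> u < a + delta -> M < v ->
         Rabs (RiemannInt pr - l) < eps).

Definition Iint (f : R -> R) (a : R) : R :=
  epsilon (inhabits 0) (fun l => improper_integral f a l).

Definition Gamma (s : R) : R :=
  Iint (fun t => Rpower t (s - 1) * exp (- t)) 0.

Definition chisq_density (k : nat) (x : R) : R :=
  Rpower x (INR k / 2 - 1) * exp (- x / 2)
  / (Rpower 2 (INR k / 2) * Gamma (INR k / 2)).

Definition chisq_tail (k : nat) (c : R) : R :=
  Iint (chisq_density k) c.

(* Main.v *)
Require Import Defs.
From Stdlib Require Import Reals Lra Lia Factorial Classical ClassicalEpsilon.
From Coquelicot Require Import Coquelicot.
Open Scope R_scope.

Lemma imp_unique f a l1 l2 :
  improper_integral f a l1 -> improper_integral f a l2 -> l1 = l2.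
Proof.
  intros [Hi1 H1] [_ H2].
  destruct (Req_dec l1 l2) as [|Hne]; auto.
  set (e := Rabs (l1 - l2) / 2).
  assert (He : 0 < e). { unfold e. assert (0 < Rabs (l1 - l2)) by (apply Rabs_pos_lt; lra). lra. }
  destruct (H1 e He) as [d1 [Hd1 [M1 HM1]]].
  destruct (H2 e He) as [d2 [Hd2 [M2 HM2]]].
  set (u := a + Rmin d1 d2 / 2).
  set (v := Rmax (Rmax M1 M2) u + 1).
  assert (Hm : 0 < Rmin d1 d2) by (apply Rmin_glb_lt; lra).
  assert (Hau : a < u) by (unfold u; lra).
  assert (Huv : u <= v).
  { unfold v. pose proof (Rmax_r (Rmax M1 M2) u). lra. }
  destruct (Hi1 u v Hau Huv) as [pr].
  assert (Hv1 : M1 < v).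
  { unfold v. pose proof (Rmax_l (Rmax M1 M2) u). pose proof (Rmax_l M1 M2). lra. }
  assert (Hv2 : M2 < v).
  { unfold v. pose proof (Rmax_l (Rmax M1 M2) u). pose proof (Rmax_r M1 M2). lra. }
  assert (Hu1 : u < a + d1).
  { unfold u. pose proof (Rmin_l d1 d2). lra. }
  assert (Hu2 : u < a + d2).
  { unfold u. pose proof (Rmin_r d1 d2). lra. }
  specialize (HM1 u v pr Hau Hu1 Hv1).
  specialize (HM2 u v pr Hau Hu2 Hv2).
  apply Rabs_def2 in HM1. apply Rabs_def2 in HM2.
  unfold e in *. unfold Rabs in *. destruct (Rcase_abs (l1 - l2)); lra.
Qed.

Lemma Iint_eq f a l : improper_integral f a l -> Iint f a = l.
Proof.
  intros H. unfold Iint.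
  apply (imp_unique f a).
  - apply epsilon_spec. exists l; exact H.
  - exact H.
Qed.

Lemma ex_RInt_pos (f : R -> R) a :
  (forall x, a < x -> continuous f x) ->
  forall u v, a < u -> u <= v -> ex_RInt f u v.
Proof.
  intros Hc u v Hu Huv. apply (@ex_RInt_continuous R_CompleteNormedModule).
  intros z [Hz _]. apply Hc.
  assert (a < Rmin u v) by (apply Rmin_glb_lt; lra). lra.
Qed.

Lemma chasles3 (f : R -> R) u w1 w2 v :
  ex_RInt f u w1 -> ex_RInt f w1 w2 -> ex_RInt f w2 v ->
  RInt f u v = RInt f u w1 + RInt f w1 w2 + RInt f w2 v.
Proof.
  intros H1 H2 H3.
  assert (H12 : ex_RInt f u w2) by (apply (ex_RInt_Chasles f u w1 w2); auto).
  rewrite <- (RInt_Chasles f u w2 v H12 H3).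
  rewrite <- (RInt_Chasles f u w1 w2 H1 H2).
  reflexivity.
Qed.

Lemma imp_exists (f : R -> R) a :
  (forall x, a < x -> continuous f x) ->
  (forall x, a < x -> 0 <= f x) ->
  (exists B, forall u v, a < u -> u <= v -> RInt f u v <= B) ->
  exists l, improper_integral f a l /\
    (forall u v, a < u -> u <= v -> RInt f u v <= l) /\
    (forall B, (forall u v, a < u -> u <= v -> RInt f u v <= B) -> l <= B).
Proof.
  intros Hc Hp [B HB].
  set (E := fun y => exists u v, a < u /\ u <= v /\ y = RInt f u v).
  assert (HbE : bound E).
  { exists B. intros y [u [v [Hu [Huv ->]]]]. apply HB; auto. }
  assert (HnE : exists y, E y).
  { exists (RInt f (a+1) (a+1)). exists (a+1), (a+1). repeat split; lra. }
  destruct (completeness E HbE HnE) as [l [Hub Hlub]].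
  exists l. split; [split|split].
  - intros u v Hu Huv. constructor. apply ex_RInt_Reals_0.
    apply (ex_RInt_pos f a Hc); auto.
  - intros e He.
    assert (Hex : exists y, E y /\ l - e < y).
    { apply NNPP. intro Hn.
      assert (is_upper_bound E (l - e)).
      { intros y Hy. destruct (Rle_dec y (l - e)) as [|Hn']; auto.
        exfalso. apply Hn. exists y. split; auto. lra. }
      specialize (Hlub _ H). lra. }
    destruct Hex as [y [[u0 [v0 [Hu0 [Huv0 ->]]]] Hy]].
    exists (u0 - a). split; [lra|]. exists v0.
    intros u v pr Hu Hud Hv.
    rewrite <- RInt_Reals.
    assert (Hle : RInt f u v <= l).
    { apply Hub. exists u, v. repeat split; lra. }
    assert (Hge : RInt f u0 v0 <= RInt f u v).
    { rewrite (chasles3 f u u0 v0 v).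
      - assert (0 <= RInt f u u0).
        { apply RInt_ge_0; [lra| apply (ex_RInt_pos f a Hc); lra|].
          intros x Hx. apply Hp. lra. }
        assert (0 <= RInt f v0 v).
        { apply RInt_ge_0; [lra| apply (ex_RInt_pos f a Hc); lra|].
          intros x Hx. apply Hp. lra. }
        lra.
      - apply (ex_RInt_pos f a Hc); lra.
      - apply (ex_RInt_pos f a Hc); lra.
      - apply (ex_RInt_pos f a Hc); lra. }
    apply Rabs_def1; lra.
  - intros u v Hu Huv. apply Hub. exists u, v. auto.
  - intros B' HB'. apply Hlub. intros y [u [v [Hu [Huv ->]]]]. apply HB'; auto.
Qed.

Lemma expm1_bounds : 0.3678 <= exp (-1) <= 0.3681.
Proof.
  unfold exp; case (exist_exp (-1)) as (x,e); simpl in |- *;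
    unfold exp_in in e;
      assert (H := alternated_series_ineq (fun i:nat => / INR (fact i)) x 3).
  cut
    (sum_f_R0 (tg_alt (fun i:nat => / INR (fact i))) (S (2 * 3)) <= x <=
      sum_f_R0 (tg_alt (fun i:nat => / INR (fact i))) (2 * 3)).
  { intros [H1 H2]. simpl in H1, H2; unfold tg_alt in H1, H2; simpl in H1, H2.
    split; lra. }
  apply H.
  - unfold Un_decreasing; intros;
      apply Rmult_le_reg_l with (INR (fact n)).
    { apply INR_fact_lt_0. }
    apply Rmult_le_reg_l with (INR (fact (S n))).
    { apply INR_fact_lt_0. }
    rewrite Rinv_r.
    2:{ apply INR_fact_neq_0. }
    rewrite Rmult_1_r; rewrite Rmult_comm; rewrite Rmult_assoc;
      rewrite Rinv_l.
    2:{ apply INR_fact_neq_0. }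
    rewrite Rmult_1_r; apply le_INR; apply fact_le; apply Nat.le_succ_diag_r.
  - assert (H0 := cv_speed_pow_fact 1); unfold Un_cv; unfold Un_cv in H0;
      intros; elim (H0 _ H1); intros; exists x0; intros;
      unfold Rdist in H2; unfold Rdist;
      replace (/ INR (fact n)) with (1 ^ n / INR (fact n));auto.
    unfold Rdiv; rewrite pow1; rewrite Rmult_1_l; reflexivity.
  - unfold infinite_sum in e; unfold Un_cv, tg_alt; intros; elim (e _ H0);
      intros; exists x0; intros;
      replace (sum_f_R0 (fun i:nat => (-1) ^ i * / INR (fact i)) n) with
      (sum_f_R0 (fun i:nat => / INR (fact i) * (-1) ^ i) n);auto.
    apply sum_eq; intros; apply Rmult_comm.
Qed.

Lemma exd_cont (f : R -> R) x : ex_derive f x -> continuous f x.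
Proof. intros H. exact (@ex_derive_continuous R_AbsRing R_NormedModule f x H). Qed.

Definition gint (s : R) := fun t => Rpower t (s - 1) * exp (- t).

Lemma cont_pow_exp s t : 0 < t -> continuous (fun t => Rpower t s * exp (-t)) t.
Proof. intros Ht. apply exd_cont. unfold Rpower. auto_derive. lra. Qed.

Lemma gint_cont s x : 0 < x -> continuous (gint s) x.
Proof. apply cont_pow_exp. Qed.

Lemma gint_pos s x : 0 < x -> 0 < gint s x.
Proof. intros. unfold gint, Rpower. apply Rmult_lt_0_compat; apply exp_pos. Qed.

Lemma mono_partial (f : R -> R) a u1 u v v1 :
  (forall x, a < x -> continuous f x) -> (forall x, a < x -> 0 <= f x) ->
  a < u1 -> u1 <= u -> u <= v -> v <= v1 -> RInt f u v <= RInt f u1 v1.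
Proof.
  intros Hc Hp H1 H2 H3 H4.
  rewrite (chasles3 f u1 u v v1); try (apply (ex_RInt_pos f a Hc); lra).
  assert (0 <= RInt f u1 u).
  { apply RInt_ge_0; [lra| apply (ex_RInt_pos f a Hc); lra|]. intros; apply Hp; lra. }
  assert (0 <= RInt f v v1).
  { apply RInt_ge_0; [lra| apply (ex_RInt_pos f a Hc); lra|]. intros; apply Hp; lra. }
  lra.
Qed.

Lemma FTC_pow s u v : 0 < u -> u <= v ->
  RInt (fun t => Rpower t s * exp (-t)) u v =
  s * RInt (gint s) u v + Rpower u s * exp (-u) - Rpower v s * exp (-v).
Proof.
  intros Hu Huv.
  assert (Hmin : Rmin u v = u) by (apply Rmin_left; lra).
  assert (Hmax : Rmax u v = v) by (apply Rmax_right; lra).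
  assert (HI := is_RInt_derive (fun t => Rpower t s * exp (-t))
     (fun t => s * gint s t - Rpower t s * exp (-t)) u v).
  assert (HI' : is_RInt (fun t => s * gint s t - Rpower t s * exp (-t)) u v
      (Rpower v s * exp (-v) - Rpower u s * exp (-u))).
  { apply HI.
    - intros x Hx. rewrite Hmin, Hmax in Hx. unfold gint, Rpower. auto_derive; [lra|].
      replace ((s-1) * ln x) with (s * ln x + - ln x) by ring.
      rewrite exp_plus, (exp_Ropp (ln x)), (exp_ln x) by lra. field. lra.
    - intros x Hx. rewrite Hmin, Hmax in Hx. apply exd_cont.
      unfold gint, Rpower. auto_derive. lra. }
  assert (Hg : ex_RInt (gint s) u v) by (apply (ex_RInt_pos _ 0); [apply gint_cont|lra|lra]).
  assert (Hf : ex_RInt (fun t => Rpower t s * exp (-t)) u v)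
    by (apply (ex_RInt_pos _ 0); [intros; apply cont_pow_exp; lra|lra|lra]).
  pose proof (@is_RInt_unique R_CompleteNormedModule _ _ _ _ HI') as HE.
  rewrite (@RInt_minus R_CompleteNormedModule) in HE; [| |exact Hf].
  - rewrite (@RInt_scal R_CompleteNormedModule) in HE by exact Hg.
    unfold minus, plus, opp, scal in HE. simpl in HE.
    unfold mult in HE; simpl in HE. lra.
  - apply (@ex_RInt_scal R_CompleteNormedModule). exact Hg.
Qed.

Lemma FTC (F f : R -> R) u v : u <= v ->
  (forall x, u <= x <= v -> is_derive F x (f x)) ->
  (forall x, u <= x <= v -> continuous f x) -> @eq R (RInt f u v) (F v - F u).
Proof.
  intros Huv Hd Hc.
  assert (Hmin : Rmin u v = u) by (apply Rmin_left; lra).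
  assert (Hmax : Rmax u v = v) by (apply Rmax_right; lra).
  assert (HI : is_RInt f u v (minus (F v) (F u))).
  { apply (@is_RInt_derive R_CompleteNormedModule).
    - intros x Hx. rewrite Hmin, Hmax in Hx. auto.
    - intros x Hx. rewrite Hmin, Hmax in Hx. auto. }
  exact (@is_RInt_unique R_CompleteNormedModule _ _ _ _ HI).
Qed.

Lemma RInt_le' (f g : R -> R) u v : u <= v ->
  (forall x, u <= x <= v -> continuous f x) ->
  (forall x, u <= x <= v -> continuous g x) ->
  (forall x, u < x < v -> f x <= g x) -> RInt f u v <= RInt g u v.
Proof.
  intros Huv Hf Hg H.
  assert (Hmin : Rmin u v = u) by (apply Rmin_left; lra).
  assert (Hmax : Rmax u v = v) by (apply Rmax_right; lra).
  apply RInt_le; auto.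
  - apply (@ex_RInt_continuous R_CompleteNormedModule). rewrite Hmin, Hmax. auto.
  - apply (@ex_RInt_continuous R_CompleteNormedModule). rewrite Hmin, Hmax. auto.
Qed.

Lemma ln1p_lb x : 0 <= x -> 2 * x / (2 + x) <= ln (1 + x).
Proof.
  intros Hx.
  assert (H1 : RInt (fun t => / (1 + t)) 0 x = ln (1 + x) - ln (1 + 0)).
  { apply (FTC (fun t => ln (1 + t))); auto.
    - intros y Hy. auto_derive; [lra|]. field. lra.
    - intros y Hy. apply exd_cont. auto_derive. lra. }
  assert (H2 : RInt (fun t => 4 / (2 + t) ^ 2) 0 x = (- 4 / (2 + x)) - (- 4 / (2 + 0))).
  { apply (FTC (fun t => - 4 / (2 + t))); auto.
    - intros y Hy. auto_derive; [lra|]. field. lra.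
    - intros y Hy. apply exd_cont. auto_derive. nra. }
  assert (H3 : RInt (fun t => 4 / (2 + t) ^ 2) 0 x <= RInt (fun t => / (1 + t)) 0 x).
  { apply RInt_le'; auto.
    - intros y Hy. apply exd_cont. auto_derive. nra.
    - intros y Hy. apply exd_cont. auto_derive. lra.
    - intros y Hy.
      assert (E : / (1 + y) - 4 / (2 + y) ^ 2 = y ^ 2 / ((1 + y) * (2 + y) ^ 2)).
      { field. lra. }
      assert (0 <= y ^ 2 / ((1 + y) * (2 + y) ^ 2)).
      { apply Rdiv_le_0_compat. nra. apply Rmult_lt_0_compat; [lra|]. apply pow_lt; lra. }
      lra. }
  rewrite Rplus_0_r, ln_1 in H1.
  replace (2 * x / (2 + x)) with ((- 4 / (2 + x)) - (- 4 / (2 + 0))) by (field; lra).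
  lra.
Qed.

Lemma exp_le_exp x y : x <= y -> exp x <= exp y.
Proof. intros [H|H]; [apply Rlt_le, exp_increasing; auto| subst; lra]. Qed.

Lemma ln_le_ln x y : 0 < x -> x <= y -> ln x <= ln y.
Proof. intros Hx [H|H]; [apply Rlt_le, ln_increasing; auto| subst; lra]. Qed.

Lemma ln_le_xm1 y : 0 < y -> ln y <= y - 1.
Proof. intros Hy. pose proof (exp_ineq1_le (ln y)). rewrite exp_ln in H; lra. Qed.

Lemma ln_ge_1mi y : 0 < y -> 1 - / y <= ln y.
Proof.
  intros Hy. pose proof (exp_ineq1_le (- ln y)).
  rewrite exp_Ropp, exp_ln in H; lra.
Qed.

Ltac sc := repeat split; try (apply Rgt_not_eq, sqrt_lt_R0); try lra; try nra.

Lemma exp_le_1 x : x <= 0 -> exp x <= 1.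
Proof. intros H. rewrite <- exp_0. apply exp_le_exp. exact H. Qed.

Definition Kb (s : R) := 17 / 5 * exp ((s - 1 / 2) * ln s - s).

Lemma Gamma_char s :
  (exists B, forall u v, 0 < u -> u <= v -> RInt (gint s) u v <= B) ->
  (forall u v, 0 < u -> u <= v -> RInt (gint s) u v <= Gamma s) /\
  (forall B, (forall u v, 0 < u -> u <= v -> RInt (gint s) u v <= B) -> Gamma s <= B) /\
  0 < Gamma s.
Proof.
  intros HB.
  destruct (imp_exists (gint s) 0 (gint_cont s) (fun x Hx => Rlt_le _ _ (gint_pos s x Hx)) HB)
    as [l [Hl [H1 H2]]].
  assert (HG : Gamma s = l) by (apply Iint_eq; exact Hl).
  rewrite HG. split; [exact H1|split; [exact H2|]].
  apply Rlt_le_trans with (RInt (gint s) 1 2); [|apply H1; lra].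
  apply RInt_gt_0; [lra| |].
  - intros; apply gint_pos; lra.
  - intros; apply gint_cont; lra.
Qed.

Definition GP (s : R) :=
  (forall u v, 0 < u -> u <= v -> RInt (gint s) u v <= Gamma s) /\
  0 < Gamma s /\ Gamma s <= Kb s.

Lemma Kb_step s : 0 < s -> s * Kb s <= Kb (s + 1).
Proof.
  intros Hs. unfold Kb.
  assert (Hl := ln1p_lb (/ s) (Rlt_le _ _ (Rinv_0_lt_compat _ Hs))).
  assert (E : ln (1 + / s) = ln (s + 1) - ln s).
  { replace (1 + / s) with ((s + 1) / s) by (field; lra).
    rewrite ln_div; lra. }
  rewrite E in Hl.
  replace (2 * / s / (2 + / s)) with (2 / (2 * s + 1)) in Hl by (field; lra).
  assert (H2 : 1 <= (s + 1 / 2) * (ln (s + 1) - ln s)).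
  { apply Rmult_le_reg_r with (/ (s + 1/2)). apply Rinv_0_lt_compat; lra.
    replace ((s + 1 / 2) * (ln (s + 1) - ln s) * / (s + 1 / 2)) with (ln (s + 1) - ln s) by (field; lra).
    replace (1 * / (s + 1/2)) with (2 / (2 * s + 1)) by (field; lra). lra. }
  rewrite <- (exp_ln s) at 1 by lra.
  replace (exp (ln s) * (17 / 5 * exp ((s - 1 / 2) * ln s - s))) with
     (17 / 5 * exp (ln s + ((s - 1 / 2) * ln s - s))) by (rewrite exp_plus; ring).
  apply Rmult_le_compat_l; [lra|].
  apply exp_le_exp.
  nra.
Qed.

Lemma small_pow s eta : 0 < s -> 0 < eta -> forall u, 0 < u ->
  exists u', 0 < u' /\ u' <= u /\ Rpower u' s <= eta.
Proof.
  intros Hs He u Hu.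
  set (w := Rpower eta (/ s)).
  assert (Hw : 0 < w) by (unfold w, Rpower; apply exp_pos).
  exists (Rmin u w). split; [apply Rmin_glb_lt; lra|split; [apply Rmin_l|]].
  apply Rle_trans with (Rpower w s).
  - apply Rle_Rpower_l; [lra|split; [apply Rmin_glb_lt; lra| apply Rmin_r]].
  - unfold w. rewrite Rpower_mult. rewrite Rinv_l by lra. rewrite Rpower_1 by lra. lra.
Qed.

Lemma GP_step s : 0 < s -> GP s -> GP (s + 1).
Proof.
  intros Hs [HP [Hpos HK]].
  assert (Eg : forall u v, 0 < u -> u <= v ->
     RInt (gint (s + 1)) u v = RInt (fun t => Rpower t s * exp (-t)) u v).
  { intros u v _ _. unfold gint. replace (s + 1 - 1) with s by ring. reflexivity. }
  assert (Hb : forall u v, 0 < u -> u <= v -> RInt (gint (s + 1)) u v <= s * Gamma s).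
  { intros u v Hu Huv.
    destruct (Rle_dec (RInt (gint (s + 1)) u v) (s * Gamma s)) as [|Hn]; auto.
    exfalso.
    set (eta := RInt (gint (s + 1)) u v - s * Gamma s).
    assert (Heta : 0 < eta) by (unfold eta; lra).
    destruct (small_pow s (eta / 2) Hs ltac:(lra) u Hu) as [u' [Hu' [Hu'u Hp]]].
    assert (Hm : RInt (gint (s + 1)) u v <= RInt (gint (s + 1)) u' v).
    { apply (mono_partial _ 0); try lra.
      - apply gint_cont.
      - intros; apply Rlt_le, gint_pos; auto. }
    rewrite (Eg u' v Hu' ltac:(lra)) in Hm.
    rewrite FTC_pow in Hm by lra.
    assert (HPs := HP u' v Hu' ltac:(lra)).
    assert (0 <= Rpower v s * exp (- v)).
    { unfold Rpower. apply Rlt_le, Rmult_lt_0_compat; apply exp_pos. }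
    assert (Rpower u' s * exp (- u') <= Rpower u' s).
    { assert (0 < Rpower u' s) by (unfold Rpower; apply exp_pos).
      assert (exp (- u') <= 1).
      { rewrite <- exp_0. apply exp_le_exp. lra. }
      nra. }
    assert (s * RInt (gint s) u' v <= s * Gamma s) by (apply Rmult_le_compat_l; lra).
    unfold eta in Hp. lra. }
  destruct (Gamma_char (s + 1) (ex_intro _ _ Hb)) as [H1 [H2 H3]].
  split; [exact H1|split; [exact H3|]].
  apply Rle_trans with (s * Gamma s); [apply H2; exact Hb|].
  apply Rle_trans with (s * Kb s); [apply Rmult_le_compat_l; lra|].
  apply Kb_step; lra.
Qed.

Lemma RInt_expm u v : u <= v -> RInt (fun t => exp (- t)) u v = exp (- u) - exp (- v).
Proof.
  intros Huv. rewrite (FTC (fun t => - exp (- t))).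
  - lra.
  - exact Huv.
  - intros x _. auto_derive; auto. ring.
  - intros x _. apply exd_cont. auto_derive. auto.
Qed.

Lemma GP_1 : GP 1.
Proof.
  assert (Hb : forall u v, 0 < u -> u <= v -> RInt (gint 1) u v <= 1).
  { intros u v Hu Huv.
    rewrite (RInt_ext (gint 1) (fun t => exp (- t))).
    - rewrite RInt_expm by lra.
      assert (exp (- u) <= 1) by (rewrite <- exp_0; apply exp_le_exp; lra).
      pose proof (exp_pos (- v)). lra.
    - intros x Hx. rewrite Rmin_left in Hx by lra.
      unfold gint. replace (1 - 1) with 0 by ring. rewrite Rpower_O by lra. lra. }
  destruct (Gamma_char 1 (ex_intro _ _ Hb)) as [H1 [H2 H3]].
  split; [exact H1|split; [exact H3|]].
  apply Rle_trans with 1; [apply H2; exact Hb|].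
  unfold Kb. rewrite ln_1. replace ((1 - 1 / 2) * 0 - 1) with (-1) by ring.
  pose proof expm1_bounds. lra.
Qed.

Lemma exp_neg_le t : 0 <= t <= 1 -> exp (- t) <= 1 - t / 2.
Proof.
  intros Ht. pose proof (exp_ineq1_le t).
  assert (E : exp (- t) * exp t = 1) by (rewrite <- exp_plus; replace (- t + t) with 0 by ring; apply exp_0).
  pose proof (exp_pos (- t)). nra.
Qed.

Lemma GP_half : GP (1 / 2).
Proof.
  assert (Eg : forall x, 0 < x -> gint (1 / 2) x = / sqrt x * exp (- x)).
  { intros x Hx. unfold gint. replace (1 / 2 - 1) with (- / 2) by field.
    rewrite Rpower_Ropp, Rpower_sqrt by lra. reflexivity. }
  assert (Hb : forall u v, 0 < u -> u <= v -> RInt (gint (1 / 2)) u v <= 5 / 3 + exp (-1)).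
  { intros u v Hu Huv.
    set (u1 := Rmin u 1). set (v1 := Rmax v 1).
    assert (Hu1 : 0 < u1) by (apply Rmin_glb_lt; lra).
    assert (Hu1a : u1 <= u) by apply Rmin_l.
    assert (Hu1b : u1 <= 1) by apply Rmin_r.
    assert (Hv1a : v <= v1) by apply Rmax_l.
    assert (Hv1b : 1 <= v1) by apply Rmax_r.
    apply Rle_trans with (RInt (gint (1 / 2)) u1 v1).
    { apply (mono_partial _ 0); auto; [apply gint_cont|intros; apply Rlt_le, gint_pos; auto]. }
    rewrite (chasles3 (gint (1/2)) u1 1 1 v1); try (apply (ex_RInt_pos _ 0); [apply gint_cont|lra|lra]).
    rewrite RInt_point. unfold zero; simpl.
    assert (A : RInt (gint (1 / 2)) u1 1 <= 5 / 3).
    { apply Rle_trans with (RInt (fun t => / sqrt t - sqrt t / 2) u1 1).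
      - apply RInt_le'; auto.
        + intros; apply gint_cont; lra.
        + intros x Hx. apply exd_cont. auto_derive. sc.
        + intros x Hx. rewrite Eg by lra.
          assert (Hs : 0 < sqrt x) by (apply sqrt_lt_R0; lra).
          assert (Hss : sqrt x * sqrt x = x) by (apply sqrt_sqrt; lra).
          pose proof (exp_neg_le x ltac:(lra)).
          assert (0 < / sqrt x) by (apply Rinv_0_lt_compat; lra).
          replace (/ sqrt x - sqrt x / 2) with (/ sqrt x * (1 - x / 2)).
          2:{ rewrite <- Hss at 2. field. lra. }
          apply Rmult_le_compat_l; lra.
      - rewrite (FTC (fun t => 2 * sqrt t - sqrt t ^ 3 / 3)); auto.
        + rewrite sqrt_1.
          assert (Hs : 0 < sqrt u1) by (apply sqrt_lt_R0; lra).
          assert (Hss : sqrt u1 * sqrt u1 = u1) by (apply sqrt_sqrt; lra).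
          assert (sqrt u1 <= 1) by nra.
          nra.
        + intros x Hx. auto_derive; [sc|].
          assert (Hs : 0 < sqrt x) by (apply sqrt_lt_R0; lra). field. lra.
        + intros x Hx. apply exd_cont. auto_derive. sc. }
    assert (B : RInt (gint (1 / 2)) 1 v1 <= exp (-1)).
    { apply Rle_trans with (RInt (fun t => exp (- t)) 1 v1).
      - apply RInt_le'; auto.
        + intros; apply gint_cont; lra.
        + intros x Hx. apply exd_cont. auto_derive. auto.
        + intros x Hx. rewrite Eg by lra.
          assert (1 <= sqrt x) by (rewrite <- sqrt_1; apply sqrt_le_1_alt; lra).
          assert (/ sqrt x <= 1).
          { rewrite <- Rinv_1. apply Rinv_le_contravar; lra. }
          assert (0 < / sqrt x) by (apply Rinv_0_lt_compat; lra).
          pose proof (exp_pos (- x)). nra.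
      - rewrite RInt_expm by lra. pose proof (exp_pos (- v1)). replace (- (1)) with (-1) by lra. lra. }
    lra. }
  destruct (Gamma_char (1 / 2) (ex_intro _ _ Hb)) as [H1 [H2 H3]].
  split; [exact H1|split; [exact H3|]].
  apply Rle_trans with (5 / 3 + exp (-1)); [apply H2; exact Hb|].
  unfold Kb. replace ((1 / 2 - 1 / 2) * ln (1 / 2) - 1 / 2) with (- (1 / 2)) by ring.
  assert (Ey : exp (- (1 / 2)) * exp (- (1 / 2)) = exp (-1)).
  { rewrite <- exp_plus. f_equal. field. }
  pose proof expm1_bounds. pose proof (exp_pos (- (1 / 2))).
  set (y := exp (- (1 / 2))) in *.
  assert (Hy : 0.6 <= y).
  { destruct (Rlt_or_le y 0.6) as [Hl|Hl]; auto.
    assert (y * y < 0.6 * 0.6) by (apply Rmult_le_0_lt_compat; lra). lra. }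
  lra.
Qed.

Lemma GP_all n : (1 <= n)%nat -> GP (INR n / 2).
Proof.
  assert (H : forall m, GP (INR (S m) / 2) /\ GP (INR (S (S m)) / 2)).
  { induction m as [|m [IH1 IH2]].
    - split.
      + replace (INR 1 / 2) with (1 / 2). apply GP_half. simpl. lra.
      + replace (INR 2 / 2) with 1. apply GP_1. simpl. lra.
    - split; [exact IH2|].
      replace (INR (S (S (S m))) / 2) with (INR (S m) / 2 + 1).
      2:{ rewrite !S_INR. lra. }
      apply GP_step; [|exact IH1].
      rewrite S_INR. pose proof (pos_INR m). lra. }
  intros Hn. destruct n as [|m]; [lia|]. exact (proj1 (H m)).
Qed.

Lemma RInt_explin A r c u v : 0 < r -> u <= v ->
  RInt (fun x => A * exp (- r * (x - c))) u v =
  A / r * (exp (- r * (u - c)) - exp (- r * (v - c))) :> R.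
Proof.
  intros Hr Huv.
  rewrite (FTC (fun x => - A / r * exp (- r * (x - c)))).
  - field. lra.
  - exact Huv.
  - intros x _. auto_derive; auto. unfold Rminus. field. lra.
  - intros x _. apply exd_cont. auto_derive. auto.
Qed.

Lemma tail_lb (f : R -> R) c L A r l : 0 < r -> 0 < L -> 0 < A ->
  (forall u, c < u -> u < c + L -> RInt f u (c + L) <= l) ->
  (forall x, c <= x <= c + L -> A * exp (- r * (x - c)) <= f x) ->
  (forall x, c <= x <= c + L -> continuous f x) ->
  A / r * (1 - exp (- r * L)) <= l.
Proof.
  intros Hr HL HA Hl Hpw Hc.
  destruct (Rle_dec (A / r * (1 - exp (- r * L))) l) as [|Hn]; auto.
  exfalso.
  set (T := A / r * (1 - exp (- r * L))) in *.
  set (eta := T - l).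
  assert (He : 0 < eta) by (unfold eta; lra).
  set (d := Rmin (L / 2) (eta / (2 * A))).
  assert (Hd : 0 < d) by (apply Rmin_glb_lt; [lra| apply Rdiv_lt_0_compat; lra]).
  assert (Hd1 : d <= L / 2) by apply Rmin_l.
  assert (Hd2 : d <= eta / (2 * A)) by apply Rmin_r.
  set (u := c + d).
  assert (H1 := Hl u ltac:(unfold u; lra) ltac:(unfold u; lra)).
  assert (H2 : RInt (fun x => A * exp (- r * (x - c))) u (c + L) <= RInt f u (c + L)).
  { apply RInt_le'; [unfold u; lra| | |].
    - intros x _. apply exd_cont. auto_derive. auto.
    - intros x Hx. apply Hc. unfold u in Hx. lra.
    - intros x Hx. apply Hpw. unfold u in Hx. lra. }
  rewrite RInt_explin in H2 by (unfold u; lra).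
  replace (c + L - c) with L in H2 by ring.
  unfold u in H2. replace (c + d - c) with d in H2 by ring.
  pose proof (exp_ineq1_le (- r * d)).
  assert (H3 : A / r * (1 + - r * d - exp (- r * L)) <= A / r * (exp (- r * d) - exp (- r * L))).
  { apply Rmult_le_compat_l; [apply Rlt_le, Rdiv_lt_0_compat; lra| lra]. }
  assert (E : A / r * (1 + - r * d - exp (- r * L)) = T - A * d).
  { unfold T. field. lra. }
  assert (A * d <= eta / 2).
  { apply Rle_trans with (A * (eta / (2 * A))). apply Rmult_le_compat_l; lra.
    right. field. lra. }
  unfold eta, u in *. lra.
Qed.

Lemma D_pos k : (1 <= k)%nat -> 0 < Rpower 2 (INR k / 2) * Gamma (INR k / 2).
Proof.
  intros Hk. destruct (GP_all k Hk) as [_ [H _]].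
  apply Rmult_lt_0_compat; [unfold Rpower; apply exp_pos| exact H].
Qed.

Lemma dens_cont k x : (1 <= k)%nat -> 0 < x -> continuous (chisq_density k) x.
Proof.
  intros Hk Hx. pose proof (D_pos k Hk) as HD. unfold Rpower in HD.
  apply exd_cont. unfold chisq_density, Rpower. auto_derive. repeat split; auto; lra.
Qed.

Lemma dens_nonneg k x : (1 <= k)%nat -> 0 < x -> 0 <= chisq_density k x.
Proof.
  intros Hk Hx. pose proof (D_pos k Hk) as HD. unfold chisq_density.
  apply Rlt_le, Rdiv_lt_0_compat; [|exact HD].
  unfold Rpower. apply Rmult_lt_0_compat; apply exp_pos.
Qed.

Lemma pow_exp_bound s x : 0 < s -> 1 <= x ->
  Rpower x (s - 1) * exp (- x / 2) <= exp (s * (ln (4 * s) - 1)) * exp (- (1 / 4) * (x - 0)).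
Proof.
  intros Hs Hx. unfold Rpower. rewrite <- !exp_plus. apply exp_le_exp.
  assert (H0 : 0 <= ln x) by (rewrite <- ln_1; apply ln_le_ln; lra).
  assert (H1 : ln x <= ln (4 * s) + (x / (4 * s) - 1)).
  { replace x with ((4 * s) * (x / (4 * s))) at 1 by (field; lra).
    rewrite ln_mult by (try apply Rdiv_lt_0_compat; lra).
    pose proof (ln_le_xm1 (x / (4 * s)) ltac:(apply Rdiv_lt_0_compat; lra)). lra. }
  assert (H2 : s * ln x <= s * (ln (4 * s) + (x / (4 * s) - 1))) by (apply Rmult_le_compat_l; lra).
  replace (s * (ln (4 * s) + (x / (4 * s) - 1))) with (s * (ln (4 * s) - 1) + x / 4) in H2 by (field; lra).
  nra.
Qed.

Lemma chi_lb k c L r : (1 <= k)%nat -> 1 <= c -> 0 < L -> 0 < r ->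
  (forall x, c <= x <= c + L ->
     Rpower c (INR k / 2 - 1) * exp (- c / 2) * exp (- r * (x - c)) <=
     Rpower x (INR k / 2 - 1) * exp (- x / 2)) ->
  Rpower c (INR k / 2 - 1) * exp (- c / 2) / (Rpower 2 (INR k / 2) * Gamma (INR k / 2)) / r
    * (1 - exp (- r * L)) <= chisq_tail k c.
Proof.
  intros Hk Hc HL Hr Hpw.
  pose proof (D_pos k Hk) as HD.
  set (D := Rpower 2 (INR k / 2) * Gamma (INR k / 2)) in *.
  set (s := INR k / 2) in *.
  assert (Hs : 0 < s).
  { unfold s. apply Rdiv_lt_0_compat; [|lra]. apply lt_0_INR. lia. }
  set (B0 := exp (s * (ln (4 * s) - 1))).
  assert (HB : exists B, forall u v, c < u -> u <= v -> RInt (chisq_density k) u v <= B).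
  { exists (B0 / D / (1 / 4) * 1). intros u v Hu Huv.
    apply Rle_trans with (RInt (fun x => B0 / D * exp (- (1 / 4) * (x - 0))) u v).
    - apply RInt_le'; auto.
      + intros x Hx. apply dens_cont; auto. lra.
      + intros x Hx. apply exd_cont. auto_derive. auto.
      + intros x Hx. unfold chisq_density. fold s D.
        replace (B0 / D * exp (- (1/4)*(x-0))) with ((B0 * exp (- (1/4)*(x-0))) / D) by (field; lra).
        apply Rmult_le_compat_r; [apply Rlt_le, Rinv_0_lt_compat; exact HD|].
        unfold B0. apply pow_exp_bound; lra.
    - rewrite RInt_explin by lra.
      assert (0 < B0 / D) by (apply Rdiv_lt_0_compat; [unfold B0; apply exp_pos| exact HD]).
      apply Rmult_le_compat_l; [apply Rlt_le, Rdiv_lt_0_compat; lra|].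
      assert (exp (- (1 / 4) * (u - 0)) <= 1) by (apply exp_le_1; lra).
      pose proof (exp_pos (- (1 / 4) * (v - 0))). lra. }
  destruct (imp_exists (chisq_density k) c
     (fun x Hx => dens_cont k x Hk ltac:(lra))
     (fun x Hx => dens_nonneg k x Hk ltac:(lra)) HB) as [l [Hl [H1 _]]].
  unfold chisq_tail. rewrite (Iint_eq _ _ _ Hl).
  replace (Rpower c (s - 1) * exp (- c / 2) / D / r) with
          ((Rpower c (s - 1) * exp (- c / 2) / D) / r) by reflexivity.
  apply (tail_lb (chisq_density k) c L); auto.
  - apply Rdiv_lt_0_compat; [|exact HD].
    unfold Rpower. apply Rmult_lt_0_compat; apply exp_pos.
  - intros u Hu1 Hu2. apply H1; lra.
  - intros x Hx. unfold chisq_density. fold s D.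
    specialize (Hpw x Hx).
    replace (Rpower c (s - 1) * exp (- c / 2) / D * exp (- r * (x - c))) with
       ((Rpower c (s - 1) * exp (- c / 2) * exp (- r * (x - c))) / D) by (field; lra).
    apply Rmult_le_compat_r; [apply Rlt_le, Rinv_0_lt_compat; exact HD|].
    exact Hpw.
  - intros x Hx. apply dens_cont; auto. lra.
Qed.

Lemma PW_ge1 s c L x : 1 <= s -> 0 < c -> 0 < L -> c <= x <= c + L ->
  Rpower c (s - 1) * exp (- c / 2) * exp (- (1 / 2 - (s - 1) / (c + L)) * (x - c)) <=
  Rpower x (s - 1) * exp (- x / 2).
Proof.
  intros Hs Hc HL Hx. unfold Rpower. rewrite <- !exp_plus. apply exp_le_exp.
  assert (H1 : 1 - / (x / c) <= ln (x / c)) by (apply ln_ge_1mi; apply Rdiv_lt_0_compat; lra).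
  rewrite ln_div in H1 by lra.
  replace (1 - / (x / c)) with ((x - c) / x) in H1 by (field; lra).
  assert (H2 : (x - c) / (c + L) <= (x - c) / x).
  { unfold Rdiv. apply Rmult_le_compat_l; [lra|]. apply Rinv_le_contravar; lra. }
  assert (H3 : (s - 1) * ((x - c) / (c + L)) <= (s - 1) * (ln x - ln c)).
  { apply Rmult_le_compat_l; lra. }
  replace ((s - 1) * ((x - c) / (c + L))) with ((s - 1) / (c + L) * (x - c)) in H3 by (field; lra).
  lra.
Qed.

Lemma PW_le1 s c x : s <= 1 -> 0 < c -> c <= x ->
  Rpower c (s - 1) * exp (- c / 2) * exp (- (1 / 2 + (1 - s) / c) * (x - c)) <=
  Rpower x (s - 1) * exp (- x / 2).
Proof.
  intros Hs Hc Hx. unfold Rpower. rewrite <- !exp_plus. apply exp_le_exp.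
  assert (H1 : ln (x / c) <= x / c - 1) by (apply ln_le_xm1; apply Rdiv_lt_0_compat; lra).
  rewrite ln_div in H1 by lra.
  assert (H3 : (1 - s) * (ln x - ln c) <= (1 - s) * (x / c - 1)).
  { apply Rmult_le_compat_l; lra. }
  replace ((1 - s) * (x / c - 1)) with ((1 - s) / c * (x - c)) in H3 by (field; lra).
  lra.
Qed.

Lemma exp_div4 a b c d K : K <> 0 ->
  exp a * exp b / (exp c * (K * exp d)) = / K * exp (a + b - c - d).
Proof.
  intros HK. unfold Rminus. rewrite !exp_plus, !exp_Ropp.
  pose proof (exp_pos c). pose proof (exp_pos d). field. lra.
Qed.

Lemma key_id s e : 1 <= s -> 0 <= e ->
  Rpower (2 * s * (1 + e)) (s - 1) * exp (- (2 * s * (1 + e)) / 2) / (Rpower 2 s * Kb s) =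
  exp ((s - 1) * ln (1 + e)) * exp (- (s * e)) * (5 / 17) / (2 * sqrt s).
Proof.
  intros Hs He. unfold Rpower, Kb.
  rewrite exp_div4 by lra.
  rewrite ln_mult by lra. rewrite ln_mult by lra.
  rewrite <- (Rpower_sqrt s) by lra. unfold Rpower.
  replace ((s - 1) * (ln 2 + ln s + ln (1 + e)) + - (2 * s * (1 + e)) / 2 - s * ln 2 -
      ((s - 1 / 2) * ln s - s)) with
      (((s - 1) * ln (1 + e) + - (s * e)) + - ln 2 + - (/ 2 * ln s)) by field.
  rewrite !exp_plus, !exp_Ropp, exp_ln by lra.
  pose proof (exp_pos (/ 2 * ln s)). pose proof (exp_pos (s * e)). field. lra.
Qed.

Lemma poly1 x e : 1 <= x -> 0 <= e ->
  17 * ((x * x * e + x + 1) * (1 + e)) <=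
  3.1595 * (4.242 * x * e + 6) * ((1 + x * x * e) * (x * (1 + e) + 1)).
Proof.
  intros Hx He.
  set (A := (1 + x * x * e) * (x * (1 + e) + 1)).
  set (B := (x * x * e + x + 1) * (1 + e)).
  assert (HAB : B <= A).
  { unfold A, B.
    assert (0 <= e * (x * x * x - 1)).
    { apply Rmult_le_pos; [lra|]. assert (H1 : 1 <= x * x) by nra. assert (1 <= x * x * x) by nra. lra. }
    assert (0 <= x * x * e * e * (x - 1)).
    { apply Rmult_le_pos; [|lra]. repeat apply Rmult_le_pos; lra. }
    nra. }
  assert (HB : 0 <= B).
  { unfold B. apply Rmult_le_pos; [|lra].
    assert (0 <= x * x * e) by (repeat apply Rmult_le_pos; lra); lra. }
  assert (0 <= 4.242 * x * e) by (apply Rmult_le_pos; [apply Rmult_le_pos|]; lra).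
  assert (18 <= 3.1595 * (4.242 * x * e + 6)) by lra.
  assert (0 <= A) by lra.
  apply Rle_trans with (18 * A); [lra|]. apply Rmult_le_compat_r; lra.
Qed.

Lemma inv_le_div a n d : 0 < a -> 0 < d -> d <= a * n -> / a <= n / d.
Proof.
  intros Ha Hd H.
  apply Rmult_le_reg_l with (a * d); [apply Rmult_lt_0_compat; lra|].
  replace (a * d * / a) with d by (field; lra).
  replace (a * d * (n / d)) with (a * n) by (field; lra). exact H.
Qed.

Lemma final_ge2 x e P E1 S2 Q : 1 <= x -> 0 <= e -> 1 + x * x * e <= P * (1 + e) ->
  E1 <= 0.3681 -> 1.414 <= S2 -> 0 < Q ->
  / (3 * (S2 * x) * e + 6) * Q <=
  P * Q * (5 / 17) / (2 * x) / ((x * x * e + x + 1) / (2 * (x * x * (1 + e) + x))) * (1 - E1).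
Proof.
  intros Hx He HP HE HS HQ.
  assert (Hxxe : 0 <= x * x * e) by (apply Rmult_le_pos; [apply Rmult_le_pos|]; lra).
  assert (HPp : 0 < P).
  { destruct (Rlt_or_le 0 P) as [|Hn]; auto. assert (P * (1 + e) <= 0) by (apply Rmult_le_0_r; lra). lra. }
  set (N := P * 5 * (1 - E1) * (x * x * (1 + e) + x)).
  set (Dn := 17 * (x * (x * x * e + x + 1))).
  assert (HDn : 0 < Dn) by (unfold Dn; apply Rmult_lt_0_compat; [lra|apply Rmult_lt_0_compat; lra]).
  replace (P * Q * (5 / 17) / (2 * x) / ((x * x * e + x + 1) / (2 * (x * x * (1 + e) + x))) * (1 - E1))
    with (Q * (N / Dn)).
  2:{ unfold N, Dn. assert (1 * 1 <= x * x) by (apply Rmult_le_compat; lra). field. repeat split; lra. }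
  rewrite Rmult_comm. apply Rmult_le_compat_l; [lra|].
  set (W := 3 * (S2 * x) * e + 6).
  assert (Hxe : 0 <= x * e) by (apply Rmult_le_pos; lra).
  assert (HW : 4.242 * x * e + 6 <= W).
  { unfold W. assert (4.242 * (x * e) <= 3 * S2 * (x * e)) by (apply Rmult_le_compat_r; lra). nra. }
  apply inv_le_div; [lra|exact HDn|].
  assert (Hpoly := poly1 x e Hx He).
  apply Rmult_le_reg_r with (1 + e); [lra|].
  assert (Hq : 0 <= x * x * (1 + e) + x) by nra.
  assert (H1 : 3.1595 * (4.242 * x * e + 6) * ((1 + x * x * e) * (x * x * (1 + e) + x)) <=
               W * (5 * (1 - E1) * (P * (1 + e)) * (x * x * (1 + e) + x))).
  { assert (0 <= (1 + x * x * e) * (x * x * (1 + e) + x)) by (apply Rmult_le_pos; lra).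
    assert (3.1595 * ((1 + x * x * e) * (x * x * (1 + e) + x)) <=
            5 * (1 - E1) * (P * (1 + e)) * (x * x * (1 + e) + x)).
    { assert (3.1595 <= 5 * (1 - E1)) by lra.
      replace (5 * (1 - E1) * (P * (1 + e)) * (x * x * (1 + e) + x)) with
        ((5 * (1 - E1)) * ((P * (1 + e)) * (x * x * (1 + e) + x))) by ring.
      apply Rmult_le_compat; try lra.
      apply Rmult_le_compat_r; lra. }
    replace (3.1595 * (4.242 * x * e + 6) * ((1 + x * x * e) * (x * x * (1 + e) + x))) with
      ((4.242 * x * e + 6) * (3.1595 * ((1 + x * x * e) * (x * x * (1 + e) + x)))) by ring.
    apply Rmult_le_compat; try lra.
    }
  assert (H2 : Dn * (1 + e) = x * (17 * ((x * x * e + x + 1) * (1 + e)))) by (unfold Dn; ring).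
  assert (H3 : 3.1595 * (4.242 * x * e + 6) * ((1 + x * x * e) * (x * x * (1 + e) + x)) =
     x * (3.1595 * (4.242 * x * e + 6) * ((1 + x * x * e) * (x * (1 + e) + 1)))) by ring.
  assert (H4 : x * (17 * ((x * x * e + x + 1) * (1 + e))) <=
     x * (3.1595 * (4.242 * x * e + 6) * ((1 + x * x * e) * (x * (1 + e) + 1)))).
  { apply Rmult_le_compat_l; lra. }
  assert (H5 : W * N * (1 + e) = W * (5 * (1 - E1) * (P * (1 + e)) * (x * x * (1 + e) + x))).
  { unfold N. ring. }
  lra.
Qed.

Lemma sqrt2_bounds : 1.414 <= sqrt 2 <= 1.4143.
Proof.
  assert (H : sqrt 2 * sqrt 2 = 2) by (apply sqrt_sqrt; lra).
  assert (Hp : 0 < sqrt 2) by (apply sqrt_lt_R0; lra).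
  split.
  - destruct (Rlt_or_le (sqrt 2) 1.414) as [Hl|Hl]; auto.
    assert (sqrt 2 * sqrt 2 < 1.414 * 1.414) by (apply Rmult_le_0_lt_compat; lra). lra.
  - destruct (Rlt_or_le 1.4143 (sqrt 2)) as [Hl|Hl]; auto.
    assert (1.4143 * 1.4143 < sqrt 2 * sqrt 2) by (apply Rmult_le_0_lt_compat; lra). lra.
Qed.

Lemma case_ge2 k eps : (2 <= k)%nat -> 0 <= eps ->
  / (3 * sqrt (INR k) * eps + 6) * exp (- (INR k * eps / 2)) <= chisq_tail k (INR k * (1 + eps)).
Proof.
  intros Hk2 Heps.
  assert (Hk : (1 <= k)%nat) by lia.
  destruct (GP_all k Hk) as [_ [HG HK]].
  pose proof expm1_bounds as HE.
  pose proof sqrt2_bounds as HS2.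
  set (s := INR k / 2) in *.
  assert (Hks : INR k = 2 * s) by (unfold s; field).
  assert (Hs1 : 1 <= s). { unfold s. apply le_INR in Hk2. simpl in Hk2. lra. }
  set (x := sqrt s).
  assert (Hx : x * x = s) by (apply sqrt_sqrt; lra).
  assert (Hx1 : 1 <= x) by (unfold x; rewrite <- sqrt_1; apply sqrt_le_1_alt; lra).
  set (c := INR k * (1 + eps)).
  assert (Hc : c = 2 * s * (1 + eps)) by (unfold c; rewrite Hks; ring).
  assert (Hc1 : 1 <= c) by (rewrite Hc; nra).
  set (L := 2 * x).
  set (r := 1 / 2 - (s - 1) / (c + L)).
  assert (Hr_eq : r = (x * x * eps + x + 1) / (2 * (x * x * (1 + eps) + x))).
  { unfold r, L. rewrite Hc, <- Hx. field. nra. }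
  assert (Hr : 0 < r).
  { rewrite Hr_eq. apply Rdiv_lt_0_compat; nra. }
  assert (HLB := chi_lb k c L r Hk Hc1 ltac:(unfold L; lra) Hr
     (fun z Hz => PW_ge1 s c L z Hs1 ltac:(lra) ltac:(unfold L; lra) Hz)).
  fold s in HLB.
  eapply Rle_trans; [|exact HLB].
  set (C := Rpower c (s - 1) * exp (- c / 2)).
  assert (HC : 0 < C) by (unfold C, Rpower; apply Rmult_lt_0_compat; apply exp_pos).
  assert (HrL : exp (- r * L) <= exp (-1)).
  { apply exp_le_exp. rewrite Hr_eq. unfold L.
    assert (x * x * x * eps >= x * x * eps).
    { assert (0 <= x * x * eps) by (apply Rmult_le_pos; [apply Rmult_le_pos|]; lra). nra. }
    assert (0 < x * x * (1 + eps) + x) by nra.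
    apply Rmult_le_reg_r with (2 * (x * x * (1 + eps) + x)); [lra|].
    replace (- ((x * x * eps + x + 1) / (2 * (x * x * (1 + eps) + x))) * (2 * x) *
      (2 * (x * x * (1 + eps) + x))) with (- (2 * x * (x * x * eps + x + 1))) by (field; lra).
    nra. }
  assert (HD1 : Rpower 2 s * Gamma s <= Rpower 2 s * Kb s).
  { apply Rmult_le_compat_l; [unfold Rpower; apply Rlt_le, exp_pos| exact HK]. }
  assert (HD0 : 0 < Rpower 2 s * Gamma s) by (apply Rmult_lt_0_compat; [unfold Rpower; apply exp_pos|exact HG]).
  apply Rle_trans with (C / (Rpower 2 s * Kb s) / r * (1 - exp (-1))).
  2:{ apply Rmult_le_compat; try lra.
      - apply Rlt_le, Rdiv_lt_0_compat; [|lra]. apply Rdiv_lt_0_compat; lra.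
      - unfold Rdiv. apply Rmult_le_compat_r; [apply Rlt_le, Rinv_0_lt_compat; lra|].
        apply Rmult_le_compat_l; [lra|]. apply Rinv_le_contravar; lra. }
  unfold C. rewrite Hc. rewrite key_id by lra.
  rewrite Hks. rewrite sqrt_mult by lra. fold x.
  replace (- (2 * s * eps / 2)) with (- (s * eps)) by field.
  set (P := exp ((s - 1) * ln (1 + eps))).
  set (Q := exp (- (s * eps))).
  assert (HP : 1 + x * x * eps <= P * (1 + eps)).
  { unfold P. pose proof (exp_ineq1_le ((s - 1) * ln (1 + eps))).
    pose proof (ln_ge_1mi (1 + eps) ltac:(lra)).
    replace (1 - / (1 + eps)) with (eps / (1 + eps)) in H0 by (field; lra).
    assert ((s - 1) * (eps / (1 + eps)) <= (s - 1) * ln (1 + eps)) by (apply Rmult_le_compat_l; lra).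
    assert (1 + (s - 1) * (eps / (1 + eps)) <= exp ((s - 1) * ln (1 + eps))) by lra.
    apply Rmult_le_compat_r with (r := 1 + eps) in H2; [|lra].
    replace ((1 + (s - 1) * (eps / (1 + eps))) * (1 + eps)) with (1 + s * eps) in H2 by (field; lra).
    rewrite Hx. lra. }
  rewrite Hr_eq.
  apply final_ge2; try lra.
  unfold Q; apply exp_pos.
Qed.

Lemma case_1 eps : 0 <= eps ->
  / (3 * sqrt (INR 1) * eps + 6) * exp (- (INR 1 * eps / 2)) <= chisq_tail 1 (INR 1 * (1 + eps)).
Proof.
  intros Heps.
  assert (Hk : (1 <= 1)%nat) by lia.
  destruct (GP_all 1 Hk) as [_ [HG HK]].
  pose proof expm1_bounds as HE.
  pose proof sqrt2_bounds as HS2.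
  set (s := INR 1 / 2) in *.
  assert (Hs : s = 1 / 2) by (unfold s; simpl; field).
  set (c := INR 1 * (1 + eps)).
  assert (Hc : c = 1 + eps) by (unfold c; simpl; ring).
  assert (Hc1 : 1 <= c) by lra.
  set (L := 4).
  set (r := 1 / 2 + (1 - s) / c).
  assert (Hr_eq : r = (c + 1) / (2 * c)) by (unfold r; rewrite Hs; field; lra).
  assert (Hr : 0 < r) by (rewrite Hr_eq; apply Rdiv_lt_0_compat; lra).
  assert (HLB := chi_lb 1 c L r Hk Hc1 ltac:(unfold L; lra) Hr
     (fun z Hz => PW_le1 s c z ltac:(lra) ltac:(lra) ltac:(lra))).
  fold s in HLB.
  eapply Rle_trans; [|exact HLB].
  set (C := Rpower c (s - 1) * exp (- c / 2)).
  assert (HC : 0 < C) by (unfold C, Rpower; apply Rmult_lt_0_compat; apply exp_pos).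
  assert (HrL : exp (- r * L) <= exp (-1) * exp (-1)).
  { rewrite <- exp_plus. apply exp_le_exp. rewrite Hr_eq. unfold L.
    apply Rmult_le_reg_r with (2 * c); [lra|].
    replace (- ((c + 1) / (2 * c)) * 4 * (2 * c)) with (- (4 * (c + 1))) by (field; lra).
    lra. }
  assert (HD1 : Rpower 2 s * Gamma s <= Rpower 2 s * Kb s).
  { apply Rmult_le_compat_l; [unfold Rpower; apply Rlt_le, exp_pos| exact HK]. }
  assert (HD0 : 0 < Rpower 2 s * Gamma s) by (apply Rmult_lt_0_compat; [unfold Rpower; apply exp_pos|exact HG]).
  assert (HE2 : 0 <= exp (-1) * exp (-1)) by (apply Rmult_le_pos; lra).
  apply Rle_trans with (C / (Rpower 2 s * Kb s) / r * (1 - exp (-1) * exp (-1))).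
  2:{ apply Rmult_le_compat; try lra.
      - apply Rlt_le, Rdiv_lt_0_compat; [|lra]. apply Rdiv_lt_0_compat; [lra|].
        apply Rmult_lt_0_compat; [unfold Rpower; apply exp_pos| unfold Kb; pose proof (exp_pos ((s - 1 / 2) * ln s - s)); lra].
      - assert (exp (-1) * exp (-1) <= 0.3681 * 0.3681) by (apply Rmult_le_compat; lra). lra.
      - unfold Rdiv. apply Rmult_le_compat_r; [apply Rlt_le, Rinv_0_lt_compat; lra|].
        apply Rmult_le_compat_l; [lra|]. apply Rinv_le_contravar; lra. }
  set (y := sqrt c).
  assert (Hy : y * y = c) by (apply sqrt_sqrt; lra).
  assert (Hy1 : 1 <= y) by (unfold y; rewrite <- sqrt_1; apply sqrt_le_1_alt; lra).
  set (Q := exp (- (INR 1 * eps / 2))).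
  assert (HQ : 0 < Q) by apply exp_pos.
  assert (HCD : C / (Rpower 2 s * Kb s) = Q * 5 / (17 * sqrt 2 * y)).
  { unfold C, Kb, Q. rewrite Hs.
    replace (1 / 2 - 1) with (- / 2) by field.
    rewrite Rpower_Ropp, !Rpower_sqrt by lra. fold y.
    replace ((1 / 2 - 1 / 2) * ln (1 / 2) - 1 / 2) with (- (1 / 2)) by field.
    replace (- c / 2) with (- (1 / 2) + - (INR 1 * eps / 2)) by (rewrite Hc; simpl; field).
    rewrite exp_plus. fold Q.
    replace (Rpower 2 (1 / 2)) with (sqrt 2) by (rewrite <- Rpower_sqrt by lra; f_equal; field).
    assert (0 < y) by lra. pose proof (exp_pos (- (1 / 2))). field. lra. }
  rewrite HCD, Hr_eq.
  replace (sqrt (INR 1)) with 1 by (simpl; rewrite sqrt_1; reflexivity).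
  set (E2 := exp (-1) * exp (-1)).
  assert (HE2' : E2 <= 0.1355).
  { unfold E2. assert (exp (-1) * exp (-1) <= 0.3681 * 0.3681) by (apply Rmult_le_compat; lra). lra. }
  replace (Q * 5 / (17 * sqrt 2 * y) / ((c + 1) / (2 * c)) * (1 - E2)) with
    (Q * (10 * y * (1 - E2) / (17 * sqrt 2 * (c + 1)))).
  2:{ rewrite <- Hy. field. lra. }
  rewrite Rmult_comm. apply Rmult_le_compat_l; [lra|].
  replace (3 * 1 * eps + 6) with (3 * (c + 1)) by lra.
  apply inv_le_div; [lra| nra|].
  assert (17 * sqrt 2 <= 30 * y * (1 - E2)).
  { assert (30 * 1 * 0.8645 <= 30 * y * (1 - E2)).
    { apply Rmult_le_compat; lra. }
    lra. }
  assert (0 < c + 1) by lra.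
  nra.
Qed.

Theorem mainTheorem5 (k : nat) (eps : R) (Hk : (1 <= k)%nat) (Heps : 0 <= eps) :
  chisq_tail k (INR k * (1 + eps)) >=
  / (3 * sqrt (INR k) * eps + 6) * exp (- (INR k * eps / 2)).
Proof.
  apply Rle_ge.
  destruct (Nat.le_gt_cases 2 k) as [H2|H1].
  - apply case_ge2; auto.
  - assert (k = 1%nat) by lia. subst k. apply case_1; auto.
Qed.
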